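(* Let $r,m\ge0$ and $k\ge1$ be integers and $n\ge0$. Then $$\lim_{q\to1}\frac{\sum_{j=0}^{2n}(-1)^jq^{rj^2+mj}\begin{bmatrix} 2n\\ j\end{bmatrix}_{q^k}}{(q;q^2)_n}=(k-2r)^n.$$
   Context: $(x;q)_n=\prod_{j=0}^{n-1}(1-q^jx)$. The Gaussian binomial coefficient is $\begin{bmatrix} n\\ j\end{bmatrix}_q=\frac{(q;q)_n}{(q;q)_j(q;q)_{n-j}}$ for $0\le j\le n$, a polynomial in $q$; $\begin{bmatrix} n\\ j\end{bmatrix}_{q^k}$ is this with $q$ replaced by $q^k$. The quotient is a rational function of $q$ and the limit is taken as $q\to1$. *)

(* Defs.v *)
From Stdlib Require Export Reals.
Open Scope R_scope.

Fixpoint qpoch (x q : R) (n : nat) : R :=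
  match n with
  | O => 1
  | S n' => qpoch x q n' * (1 - q ^ n' * x)
  end.

(* Gaussian binomial [n choose j]_q = (q;q)_n / ((q;q)_j (q;q)_{n-j}).
   Only evaluated at q with q^k <> 1 below (q near 1, q <> 1, q > 0). *)
Definition qbinom (q : R) (n j : nat) : R :=
  qpoch q q n / (qpoch q q j * qpoch q q (n - j)).

(* Main.v *)
Require Import Defs.
From Stdlib Require Import Reals Lia Lra Factorial.
Open Scope R_scope.


Definition Dom := fun q : R => q <> 1.
Definition Lim (f : R -> R) (L : R) := limit1_in f Dom L 1.

Fixpoint sm (F : nat -> R) (n : nat) : R :=
  match n with O => 0 | S n => sm F n + F n end.

Lemma Lim_ext f g L : (forall q, q <> 1 -> Rabs (q-1) < 1/2 -> f q = g q) -> Lim g L -> Lim f L.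
Proof.
  intros H Hg eps He. destruct (Hg eps He) as [alp [Ha Hb]].
  exists (Rmin alp (1/2)). split. { apply Rmin_pos; lra. }
  intros x [Dx Hx]. simpl in *. unfold R_dist in *.
  rewrite H; auto.
  - apply Hb. split; auto. simpl. unfold R_dist. eapply Rlt_le_trans; [apply Hx|apply Rmin_l].
  - eapply Rlt_le_trans; [apply Hx|apply Rmin_r].
Qed.

Lemma Lim_const c : Lim (fun _ => c) c.
Proof. intros eps He. exists 1. split; [lra|]. intros x _. simpl. unfold R_dist. rewrite Rminus_diag, Rabs_R0. lra. Qed.

Lemma Lim_id : Lim (fun q => q) 1.
Proof. intros eps He. exists eps. split; [lra|]. intros x [_ H]. exact H. Qed.

Lemma Lim_plus f g a b : Lim f a -> Lim g b -> Lim (fun q => f q + g q) (a+b).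
Proof. apply limit_plus. Qed.
Lemma Lim_minus f g a b : Lim f a -> Lim g b -> Lim (fun q => f q - g q) (a-b).
Proof. apply limit_minus. Qed.
Lemma Lim_mul f g a b : Lim f a -> Lim g b -> Lim (fun q => f q * g q) (a*b).
Proof. apply limit_mul. Qed.
Lemma Lim_inv f a : Lim f a -> a <> 0 -> Lim (fun q => / f q) (/ a).
Proof. apply limit_inv. Qed.

Lemma Lim_pow f a n : Lim f a -> Lim (fun q => f q ^ n) (a ^ n).
Proof.
  intros H. induction n; simpl.
  - apply Lim_const.
  - apply Lim_mul; auto.
Qed.

Lemma Lim_eq f a b : Lim f a -> a = b -> Lim f b.
Proof. intros; subst; auto. Qed.

Lemma Lim_sm (F : nat -> R -> R) V n :
  (forall l, (l < n)%nat -> Lim (F l) (V l)) -> Lim (fun q => sm (fun l => F l q) n) (sm V n).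
Proof.
  induction n; intros H; simpl.
  - apply Lim_const.
  - apply Lim_plus; auto.
Qed.

Definition Ord (X : R -> R) (e : nat) (L : R) := Lim (fun q => X q / (1 - q)^e) L.

Lemma eps_nz q : q <> 1 -> forall e, (1 - q)^e <> 0.
Proof. intros. apply pow_nonzero. lra. Qed.

Lemma Ord_ext X Y e L : (forall q, q <> 1 -> Rabs (q-1) < 1/2 -> X q = Y q) -> Ord Y e L -> Ord X e L.
Proof. intros H HY. unfold Ord. eapply Lim_ext; [|exact HY]. intros q H1 H2. simpl. rewrite H; auto. Qed.

Lemma Ord_eq X e e' L L' : Ord X e L -> e = e' -> L = L' -> Ord X e' L'.
Proof. intros; subst; auto. Qed.

Lemma Ord_mul X Y e1 e2 L1 L2 : Ord X e1 L1 -> Ord Y e2 L2 -> Ord (fun q => X q * Y q) (e1+e2) (L1*L2).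
Proof.
  intros H1 H2. unfold Ord. eapply Lim_ext; [|apply (Lim_mul _ _ _ _ H1 H2)].
  intros q Hq _. simpl. rewrite pow_add. field. split; apply eps_nz; auto.
Qed.

Lemma Lim_eps s : Lim (fun q => (1 - q)^s) (0^s).
Proof. apply Lim_pow. replace 0 with (1 - 1) by ring. apply Lim_minus. apply Lim_const. apply Lim_id. Qed.

Lemma Ord_drop X h s L : Ord X (h + s) L -> Ord X h (L * 0^s).
Proof.
  intros H. unfold Ord. eapply Lim_ext; [|apply (Lim_mul _ _ _ _ H (Lim_eps s))].
  intros q Hq _. simpl. rewrite pow_add. field. split; apply eps_nz; auto.
Qed.

Lemma Ord_plus X Y e a b : Ord X e a -> Ord Y e b -> Ord (fun q => X q + Y q) e (a+b).
Proof.
  intros H1 H2. unfold Ord. eapply Lim_ext; [|apply (Lim_plus _ _ _ _ H1 H2)].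
  intros q Hq _. simpl. field. apply eps_nz; auto.
Qed.
Lemma Ord_minus X Y e a b : Ord X e a -> Ord Y e b -> Ord (fun q => X q - Y q) e (a-b).
Proof.
  intros H1 H2. unfold Ord. eapply Lim_ext; [|apply (Lim_minus _ _ _ _ H1 H2)].
  intros q Hq _. simpl. field. apply eps_nz; auto.
Qed.
Lemma Ord_scal X e a c : Ord X e a -> Ord (fun q => c * X q) e (c*a).
Proof.
  intros H1. unfold Ord. eapply Lim_ext; [|apply (Lim_mul _ _ _ _ (Lim_const c) H1)].
  intros q Hq _. simpl. field. apply eps_nz; auto.
Qed.
Lemma Ord_sm (F : nat -> R -> R) V e n :
  (forall l, (l < n)%nat -> Ord (F l) e (V l)) -> Ord (fun q => sm (fun l => F l q) n) e (sm V n).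
Proof.
  induction n; intros H; simpl.
  - unfold Ord. eapply Lim_ext; [|apply (Lim_const 0)]. intros; simpl. field. apply eps_nz; auto.
  - apply Ord_plus; auto.
Qed.


Lemma Ord_const c : Ord (fun _ => c) 0 c.
Proof. unfold Ord. eapply Lim_ext; [|apply (Lim_const c)]. intros; simpl. field. Qed.

Lemma Lim_qpow c : Lim (fun q => q^c) 1.
Proof. eapply Lim_eq. apply (Lim_pow _ _ c Lim_id). apply pow1. Qed.

Lemma Ord_qpow c : Ord (fun q => q^c) 0 1.
Proof. unfold Ord. eapply Lim_ext; [|apply (Lim_qpow c)]. intros; simpl. field. Qed.

Lemma sm_const c n : sm (fun _ => c) n = INR n * c.
Proof. induction n; simpl sm. simpl; ring. rewrite IHn, S_INR. ring. Qed.

Lemma geom q c : q^c - 1 = (q - 1) * sm (fun j => q^j) c.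
Proof. induction c; simpl sm. simpl; ring. simpl pow. rewrite Rmult_plus_distr_l, <- IHc. simpl; ring. Qed.

Lemma Ord_qm1 c : Ord (fun q => q^c - 1) 1 (- INR c).
Proof.
  unfold Ord.
  eapply Lim_ext; [|eapply Lim_eq; [apply (limit_Ropp _ _ _ _ (Lim_sm (fun j q => q^j) (fun _ => 1) c (fun l _ => Lim_qpow l)))|]].
  - intros q Hq _. simpl. rewrite geom. field. lra.
  - rewrite sm_const. ring.
Qed.

Lemma Ord_pw X e L l : Ord X e L -> Ord (fun q => X q ^ l) (e*l) (L^l).
Proof.
  intros H. induction l.
  - eapply Ord_ext; [|eapply Ord_eq; [apply (Ord_const 1)|lia|reflexivity]]. intros; simpl; auto.
  - eapply Ord_ext; [|eapply Ord_eq; [apply (Ord_mul _ _ _ _ _ _ H IHl)|lia|reflexivity]].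
    intros; simpl; auto.
Qed.

Fixpoint dif (f : nat -> R) (D i : nat) : R :=
  match D with O => f i | S D => dif f D (S i) - dif f D i end.

Lemma dif_ext f g D i : (forall j, f j = g j) -> dif f D i = dif g D i.
Proof. intros H. revert i; induction D; intros i; simpl; auto. rewrite !IHD; auto. Qed.

Lemma dif_minus f g D i : dif (fun j => f j - g j) D i = dif f D i - dif g D i.
Proof. revert i; induction D; intros i; simpl; auto. rewrite !IHD; ring. Qed.

Lemma dif_scal c f D i : dif (fun j => c * f j) D i = c * dif f D i.
Proof. revert i; induction D; intros i; simpl; auto. rewrite !IHD; ring. Qed.

Lemma dif_dif f D i : dif (fun j => f (S j) - f j) D i = dif f (S D) i.
Proof. revert i; induction D; intros i; simpl; auto. rewrite !IHD. simpl. ring. Qed.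

Lemma dif_S f D i : dif f D (S i) = dif f D i + dif f (S D) i.
Proof. simpl. ring. Qed.

Lemma dif_exp x D i : dif (fun j => x ^ j) D i = x ^ i * (x - 1) ^ D.
Proof. revert i; induction D; intros i; simpl. ring. rewrite !IHD. simpl. ring. Qed.

Fixpoint bin (n l : nat) : R :=
  match n, l with
  | O, O => 1
  | O, S _ => 0
  | S n, O => 1
  | S n, S l => bin n l + bin n (S l)
  end.

Lemma bin_big n l : (n < l)%nat -> bin n l = 0.
Proof.
  revert l; induction n; intros l H; destruct l; simpl; try lia; auto.
  rewrite !IHn by lia. ring.
Qed.

Lemma bin_0 n : bin n 0 = 1.
Proof. destruct n; reflexivity. Qed.

Lemma bin_1 n : bin n 1 = INR n.
Proof. induction n. reflexivity. simpl bin. rewrite IHn, bin_0, S_INR. ring. Qed.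

Lemma sm_plus F G n : sm (fun l => F l + G l) n = sm F n + sm G n.
Proof. induction n; simpl; [ring|rewrite IHn; ring]. Qed.
Lemma sm_ext F G n : (forall l, (l < n)%nat -> F l = G l) -> sm F n = sm G n.
Proof. induction n; intros H; simpl; auto. rewrite IHn, H; auto. Qed.
Lemma sm_shift F n : sm F (S n) = F O + sm (fun l => F (S l)) n.
Proof. induction n. simpl; ring. change (sm F (S (S n))) with (sm F (S n) + F (S n)). rewrite IHn. simpl. ring. Qed.
Lemma sm_scal c F n : sm (fun l => c * F l) n = c * sm F n.
Proof. induction n; simpl; [ring|rewrite IHn; ring]. Qed.
Lemma sm_minus F G n : sm (fun l => F l - G l) n = sm F n - sm G n.
Proof. induction n; simpl; [ring|rewrite IHn; ring]. Qed.

Lemma pascal_sum T D :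
  sm (fun l => bin (S D) l * T l) (S (S D)) =
  sm (fun l => bin D l * T l) (S D) + sm (fun l => bin D l * T (S l)) (S D).
Proof.
  rewrite sm_shift. simpl bin at 1.
  transitivity (T O + sm (fun l => bin D l * T (S l)) (S D) + sm (fun l => bin D (S l) * T (S l)) (S D)).
  { rewrite Rplus_assoc, <- sm_plus. f_equal. ring. apply sm_ext. intros; simpl; ring. }
  assert (E : sm (fun l => bin D l * T l) (S D) = T O + sm (fun l => bin D (S l) * T (S l)) (S D)).
  { rewrite sm_shift, bin_0. f_equal. ring. simpl sm. rewrite (bin_big D (S D)) by lia. ring. }
  rewrite E. ring.
Qed.

Lemma leibniz f g D i :
  dif (fun j => f j * g j) D i =
  sm (fun l => bin D l * (dif f l i * dif g (D - l) (i + l))) (S D).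
Proof.
  revert i; induction D; intros i.
  - simpl. rewrite Nat.add_0_r. ring.
  - simpl dif at 1. rewrite !IHD.
    rewrite (pascal_sum (fun l => dif f l i * dif g (S D - l) (i + l)) D).
    rewrite <- sm_minus, <- sm_plus. apply sm_ext. intros l Hl.
    replace (S D - l)%nat with (S (D - l)) by lia.
    replace (S D - S l)%nat with (D - l)%nat by lia.
    rewrite dif_S with (f := f).
    replace (S i + l)%nat with (S (i + l)) by lia.
    replace (i + S l)%nat with (S (i + l)) by lia.
    simpl dif. ring.
Qed.

Ltac gen2 x := let E1 := fresh "E" in let E2 := fresh "E" in let y := fresh "y" in let z := fresh "z" in
  pose proof (Nat.div_mod_eq x 2) as E1; pose proof (Nat.mod_upper_bound x 2 (Nat.neq_succ_0 1)) as E2;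
  set (y := (x/2)%nat) in *; set (z := (x mod 2)%nat) in *; clearbody y z.
Ltac nd := repeat match goal with
 | H : context [(?x / 2)%nat] |- _ => gen2 x
 | |- context [(?x / 2)%nat] => gen2 x
 | H : context [(?x mod 2)%nat] |- _ => gen2 x
 | |- context [(?x mod 2)%nat] => gen2 x end.
Ltac lia2 := nd; lia.

Fixpoint A (r m k t : nat) : nat -> R -> R :=
  match t with
  | O => fun _ _ => 1
  | S t => fun i q => q^(k*i) * A r m k t i q - q^(r+m+2*r*i) * A r m k t (S i) q
  end.

Fixpoint cc (e : R) (t D : nat) : R :=
  match t with
  | O => match D with O => 1 | S _ => 0 end
  | S t => INR D * e * cc e t (pred D) - cc e t (S D)
  end.

Definition hh (t D : nat) : nat := ((t + D) / 2)%nat.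

Lemma cc_odd e t : forall D, ((t + D) mod 2 = 1)%nat -> cc e t D = 0.
Proof.
  induction t; intros D H; simpl.
  - destruct D; auto. simpl in H. discriminate.
  - destruct D.
    + rewrite (IHt 1%nat) by lia2. simpl. ring.
    + change (Nat.pred (S D)) with D. rewrite (IHt D) by lia2. rewrite (IHt (S (S D))) by lia2. ring.
Qed.

Lemma cc_big e t : forall D, (t < D)%nat -> cc e t D = 0.
Proof.
  induction t; intros D H; simpl.
  - destruct D; auto; lia.
  - destruct D; [lia|]. change (Nat.pred (S D)) with D. rewrite (IHt D), (IHt (S (S D))) by lia. ring.
Qed.

Lemma zpow x : (1 <= x)%nat -> 0 ^ x = 0.
Proof. intros. destruct x; [lia|]. simpl. ring. Qed.

Lemma van1 e t D l : (2 <= l)%nat -> (l <= D)%nat ->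
  0^(l + hh t (D - l) - hh (S t) D) * cc e t (D - l) = 0.
Proof.
  intros H1 H2. unfold hh.
  destruct (Nat.eq_dec ((t + (D - l)) mod 2) 1) as [Ho|Ho].
  - rewrite cc_odd by auto. ring.
  - rewrite zpow. ring. lia2.
Qed.

Lemma van2 e t D l : (1 <= l)%nat -> (l <= D)%nat ->
  0^(l + hh t (S (D - l)) - hh (S t) D) * cc e t (S (D - l)) = 0.
Proof.
  intros H1 H2. unfold hh.
  destruct (Nat.eq_dec ((t + S (D - l)) mod 2) 1) as [Ho|Ho].
  - rewrite cc_odd by auto. ring.
  - rewrite zpow. ring. lia2.
Qed.

Lemma sm_zero F n : (forall l, (l < n)%nat -> F l = 0) -> sm F n = 0.
Proof. induction n; intros H; simpl; auto. rewrite IHn, H; auto. ring. Qed.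

Lemma Ord_term X Y e1 e2 H L1 L2 b : Ord X e1 L1 -> Ord Y e2 L2 -> (H <= e1 + e2)%nat ->
  Ord (fun q => b * (X q * Y q)) H (b * (L1 * L2 * 0^(e1 + e2 - H))).
Proof.
  intros H1 H2 Hl. apply Ord_scal. apply Ord_drop.
  eapply Ord_eq. apply (Ord_mul _ _ _ _ _ _ H1 H2). lia. reflexivity.
Qed.

Lemma Ord_zero e : Ord (fun _ => 0) e 0.
Proof. unfold Ord. eapply Lim_ext; [|apply (Lim_const 0)]. intros. simpl. field. apply eps_nz; auto. Qed.

Lemma dif_const c D i : dif (fun _ => c) (S D) i = 0.
Proof. revert i; induction D; intros i; simpl in *. ring. rewrite !IHD. ring. Qed.

Definition fF r m k (q : R) (j : nat) := (q^k)^j - q^(r+m) * (q^(2*r))^j.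
Definition gG r m (q : R) (j : nat) := q^(r+m) * (q^(2*r))^j.

Lemma A_rec r m k t j q :
  A r m k (S t) j q = fF r m k q j * A r m k t j q - gG r m q j * (A r m k t (S j) q - A r m k t j q).
Proof.
  cbn [A]. unfold fF, gG. rewrite <- (pow_mult q k j), <- (pow_mult q (2*r) j), <- (pow_add q (r+m) (2*r*j)). ring.
Qed.

Lemma Ord_gdif r m l i : Ord (fun q => dif (gG r m q) l i) l ((- INR (2*r))^l).
Proof.
  eapply Ord_ext.
  { intros q _ _. unfold gG. rewrite dif_scal, dif_exp, <- pow_mult. reflexivity. }
  eapply Ord_eq.
  { apply Ord_mul. apply Ord_qpow. apply Ord_mul. apply Ord_qpow. apply Ord_pw. apply Ord_qm1. }
  simpl; lia. ring.
Qed.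

Lemma Ord_fdif r m k l i : (1 <= l)%nat ->
  Ord (fun q => dif (fF r m k q) l i) l ((- INR k)^l - (- INR (2*r))^l).
Proof.
  intros Hl. eapply Ord_ext.
  { intros q _ _. unfold fF. rewrite dif_minus, dif_exp. reflexivity. }
  apply Ord_minus.
  - eapply Ord_ext. { intros q _ _. rewrite <- pow_mult. reflexivity. }
    eapply Ord_eq.
    { apply Ord_mul. apply Ord_qpow. apply Ord_pw. apply Ord_qm1. }
    simpl; lia. ring.
  - apply Ord_gdif.
Qed.

Lemma Ord_f0 r m k i : Ord (fun q => dif (fF r m k q) 0 i) 1 (- INR (k*i) + INR (r+m+2*r*i)).
Proof.
  eapply Ord_ext.
  { intros q _ _. simpl dif. unfold fF. rewrite <- (pow_mult q k i), <- (pow_mult q (2*r) i), <- (pow_add q (r+m) (2*r*i)).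
    replace ((q ^ (k * i) - q ^ (r + m + 2 * r * i))) with ((q ^ (k * i) - 1) - (q ^ (r + m + 2 * r * i) - 1)) by ring.
    reflexivity. }
  eapply Ord_eq. apply Ord_minus; apply Ord_qm1. reflexivity. ring.
Qed.



Definition ee r k := INR (2*r) - INR k.

Lemma zero_helper a b c x : x * c = 0 -> a * (b * c * x) = 0.
Proof. intros H. replace (a * (b * c * x)) with (a * b * (x * c)) by ring. rewrite H. ring. Qed.

Lemma main r m k t : forall D i,
  Ord (fun q => dif (fun j => A r m k t j q) D i) (hh t D) (cc (ee r k) t D).
Proof.
  induction t; intros D i.
  - destruct D.
    + simpl. apply Ord_const.
    + eapply Ord_ext; [|apply Ord_zero]. intros q _ _. cbn [A]. apply dif_const.
  - set (HH := hh (S t) D).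
    set (e := ee r k).
    set (V1 := fun l => match l with O => 0 | S _ =>
       bin D l * (((- INR k)^l - (- INR (2*r))^l) * cc e t (D - l) * 0^(l + hh t (D - l) - HH)) end).
    set (V2 := fun l => bin D l * ((- INR (2*r))^l * cc e t (S (D - l)) * 0^(l + hh t (S (D - l)) - HH))).
    eapply Ord_ext.
    { intros q _ _.
      rewrite (dif_ext _ _ D i (fun j => A_rec r m k t j q)).
      rewrite dif_minus, (leibniz (fF r m k q)), (leibniz (gG r m q)).
      reflexivity. }
    eapply Ord_eq.
    { apply Ord_minus.
      - apply (Ord_sm (fun l q => bin D l * (dif (fF r m k q) l i * dif (fun j => A r m k t j q) (D - l) (i + l))) V1).
        intros l Hl. destruct l.
        + eapply Ord_eq. apply Ord_term with (H := HH). apply Ord_f0. apply IHt. unfold HH, hh. lia2.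
          reflexivity.
          unfold V1. 
          destruct (Nat.eq_dec ((t + (D - 0)) mod 2) 1) as [Ho|Ho].
          * rewrite cc_odd by auto. ring.
          * rewrite zpow. ring. unfold HH, hh. lia2.
        + eapply Ord_eq. apply Ord_term with (H := HH). apply Ord_fdif. lia. apply IHt. unfold HH, hh. lia2.
          reflexivity. unfold V1. reflexivity.
      - apply (Ord_sm (fun l q => bin D l * (dif (gG r m q) l i * dif (fun j => A r m k t (S j) q - A r m k t j q) (D - l) (i + l))) V2).
        intros l Hl.
        eapply Ord_ext. { intros q _ _. rewrite (dif_dif (fun j => A r m k t j q)). reflexivity. }
        eapply Ord_eq. apply Ord_term with (H := HH). apply Ord_gdif. apply IHt. unfold HH, hh. lia2.
        reflexivity. unfold V2. reflexivity. }
    reflexivity.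
    rewrite !sm_shift.
    assert (Z2 : sm (fun l => V2 (S l)) D = 0).
    { apply sm_zero. intros l Hl. unfold V2.
      apply zero_helper. apply van2; lia. }
    rewrite Z2.
    assert (E2 : V2 O = cc e t (S D)).
    { unfold V2. rewrite bin_0.
      replace (0 + hh t (S (D - 0)) - HH)%nat with 0%nat by (unfold HH, hh; lia2).
      rewrite Nat.sub_0_r. simpl. ring. }
    rewrite E2.
    destruct D as [|D'].
    * simpl. ring.
    * rewrite sm_shift.
      assert (Z1 : sm (fun l => V1 (S (S l))) D' = 0).
      { apply sm_zero. intros l Hl. unfold V1.
        apply zero_helper. apply van1; lia. }
      rewrite Z1.
      unfold V1. rewrite bin_1.
      replace (1 + hh t (S D' - 1) - HH)%nat with 0%nat by (unfold HH, hh; lia2).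
      replace (S D' - 1)%nat with D' by lia.
      cbn [cc]. change (Nat.pred (S D')) with D'.
      unfold e, ee. cbn [pow]. ring.
Qed.


Fixpoint G (p : R) (t j : nat) : R :=
  match t, j with
  | O, O => 1
  | O, S _ => 0
  | S t, O => 1
  | S t, S j => G p t (S j) + p^(t - j) * G p t j
  end.

Lemma G_0 p t : G p t 0 = 1.
Proof. destruct t; reflexivity. Qed.

Lemma G_big p t : forall j, (t < j)%nat -> G p t j = 0.
Proof.
  induction t; intros j H; destruct j; cbn [G]; try lia; auto.
  rewrite !IHt by lia. ring.
Qed.

Lemma sum_sm f N : sum_f_R0 f N = sm f (S N).
Proof. induction N; simpl. ring. rewrite IHN. simpl. ring. Qed.

Lemma sm_S F n : sm F (S n) = sm F n + F n.
Proof. reflexivity. Qed.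

Lemma tri1 q x y a b c d e : (a + b = c + (d + e))%nat ->
  x * q^a * y * q^b = q^c * (x * q^d * y * q^e).
Proof. intros H. replace (x * q^a * y * q^b) with (x * y * (q^a * q^b)) by ring.
  replace (q^c * (x * q^d * y * q^e)) with (x * y * (q^c * (q^d * q^e))) by ring.
  rewrite <- !pow_add, H. reflexivity. Qed.

Lemma tri2 q k x y a s b c d e : (a + k * s + b = c + (d + e))%nat ->
  (-1 * x) * q^a * ((q^k)^s * y) * q^b = - (q^c * (x * q^d * y * q^e)).
Proof. intros H. rewrite <- pow_mult.
  replace ((-1 * x) * q^a * (q^(k*s) * y) * q^b) with (- (x * y * (q^a * q^(k*s) * q^b))) by ring.
  replace (- (q^c * (x * q^d * y * q^e))) with (- (x * y * (q^c * (q^d * q^e)))) by ring.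
  rewrite <- !pow_add, H. reflexivity. Qed.

Lemma A_closed r m k q t : forall i,
  A r m k t i q = sm (fun j => (-1)^j * q^(r*j*j+m*j) * G (q^k) t j * q^(i*(k*(t-j)+2*r*j))) (S t).
Proof.
  induction t; intros i.
  - cbn [A sm G]. replace (r*0*0+m*0)%nat with 0%nat by lia.
    replace (i*(k*(0-0)+2*r*0))%nat with 0%nat by lia. simpl. ring.
  - cbn [A]. rewrite !IHt.
    rewrite (sm_shift _ (S t)). rewrite G_0.
    set (P := fun j => (-1)^(S j) * q^(r*S j*S j+m*S j) * G (q^k) t (S j) * q^(i*(k*(S t - S j)+2*r*S j))).
    set (Q := fun j => (-1)^(S j) * q^(r*S j*S j+m*S j) * ((q^k)^(t - j) * G (q^k) t j) * q^(i*(k*(S t - S j)+2*r*S j))).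
    rewrite (sm_ext (fun j => (-1)^(S j) * q^(r*S j*S j+m*S j) * G (q^k) (S t) (S j) * q^(i*(k*(S t - S j)+2*r*S j))) (fun j => P j + Q j)).
    2:{ intros j _. unfold P, Q. cbn [G]. ring. }
    rewrite sm_plus.
    assert (HP : (-1)^0 * q^(r*0*0+m*0) * 1 * q^(i*(k*(S t - 0)+2*r*0)) + sm P (S t)
                 = q^(k*i) * sm (fun j => (-1)^j * q^(r*j*j+m*j) * G (q^k) t j * q^(i*(k*(t-j)+2*r*j))) (S t)).
    { rewrite <- sm_scal.
      transitivity (sm (fun j => (-1)^j * q^(r*j*j+m*j) * G (q^k) t j * q^(i*(k*(S t-j)+2*r*j))) (S (S t))).
      { rewrite (sm_shift _ (S t)). rewrite G_0. reflexivity. }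
      rewrite (sm_S _ (S t)). rewrite (G_big _ t (S t)) by lia. rewrite Rmult_0_r, Rmult_0_l, Rplus_0_r.
      apply sm_ext. intros j Hj. apply tri1.
      replace (S t - j)%nat with (S (t - j)) by lia. generalize (t - j)%nat. intros s. ring. }
    assert (HQ : sm Q (S t) = - (q^(r+m+2*r*i) * sm (fun j => (-1)^j * q^(r*j*j+m*j) * G (q^k) t j * q^(S i*(k*(t-j)+2*r*j))) (S t))).
    { rewrite <- sm_scal.
      replace (- sm _ (S t)) with (sm (fun j => -1 * (q ^ (r + m + 2 * r * i) *
          ((-1) ^ j * q ^ (r * j * j + m * j) * G (q ^ k) t j * q ^ (S i * (k * (t - j) + 2 * r * j))))) (S t))
        by (rewrite sm_scal; ring).
      apply sm_ext. intros j Hj. unfold Q.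
      replace (S t - S j)%nat with (t - j)%nat by lia.
      change ((-1)^(S j)) with (-1 * (-1)^j).
      rewrite tri2 with (c := (r + m + 2*r*i)%nat) (d := (r*j*j+m*j)%nat) (e := (S i * (k*(t-j)+2*r*j))%nat).
      ring.
      assert (Hs : t = (j + (t - j))%nat) by lia. generalize dependent (t - j)%nat. intros s Hs. ring. }
    rewrite <- Rplus_assoc, HP, HQ. ring.
Qed.


Lemma pow_small p n : 0 < p -> p < 1 -> 0 < p^n <= 1.
Proof. intros H1 H2. induction n; simpl. lra. destruct IHn. split; nra. Qed.
Lemma pow_big p n : 1 < p -> 1 <= p^n.
Proof. intros H1. induction n; simpl. lra. nra. Qed.

Lemma pow_ne1 p n : 0 < p -> p <> 1 -> p^n * p <> 1.
Proof.
  intros H1 H2. destruct (Rlt_dec p 1).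
  - destruct (pow_small p n); auto. nra.
  - assert (1 < p) by lra. pose proof (pow_big p n H). nra.
Qed.

Lemma qpoch_nz p n : 0 < p -> p <> 1 -> qpoch p p n <> 0.
Proof.
  intros H1 H2. induction n; simpl. lra.
  apply Rmult_integral_contrapositive_currified; auto.
  pose proof (pow_ne1 p n H1 H2). lra.
Qed.

Lemma G_qbinom p t : 0 < p -> p <> 1 -> forall j, (j <= t)%nat -> G p t j = qbinom p t j.
Proof.
  intros H1 H2. pose proof (qpoch_nz p) as NZ.
  induction t; intros j Hj.
  - destruct j; [|lia]. unfold qbinom. simpl. field.
  - destruct j.
    + rewrite G_0. unfold qbinom. rewrite Nat.sub_0_r. cbn [qpoch].
      pose proof (pow_ne1 p t H1 H2). pose proof (NZ t H1 H2).
      field. repeat split; try solve [apply NZ; auto]; lra.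
    + cbn [G]. destruct (Nat.eq_dec j t) as [->|Hne].
      * rewrite G_big by lia. rewrite Nat.sub_diag. rewrite IHt by lia.
        unfold qbinom. rewrite !Nat.sub_diag. simpl pow.
        pose proof (pow_ne1 p t H1 H2). pose proof (NZ t H1 H2).
        cbn [qpoch]. field. repeat split; try solve [apply NZ; auto]; lra.
      * rewrite !IHt by lia. unfold qbinom.
        set (s := (t - S j)%nat).
        assert (Ht : t = (S j + s)%nat) by (unfold s; lia).
        replace (t - j)%nat with (S s) by (unfold s; lia).
        replace (S t - S j)%nat with (S s) by (unfold s; lia).
        cbn [qpoch].
        replace (p^t) with (p^j * p * p^s) by (rewrite Ht, pow_add; simpl; ring).
        pose proof (pow_ne1 p j H1 H2). pose proof (pow_ne1 p s H1 H2).
        pose proof (NZ t H1 H2). pose proof (NZ j H1 H2). pose proof (NZ s H1 H2).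
        simpl pow. field. repeat split; try solve [apply NZ; auto]; lra.
Qed.

Fixpoint podd (n : nat) : R := match n with O => 1 | S n => podd n * INR (2*n+1) end.

Lemma Ord_den n : Ord (fun q => qpoch q (q^2) n) n (podd n).
Proof.
  induction n.
  - simpl. apply Ord_const.
  - eapply Ord_eq.
    + apply Ord_mul. apply IHn.
      eapply Ord_ext; [|apply (Ord_scal _ _ _ (-1) (Ord_qm1 (2*n+1)))].
      intros q _ _. cbv beta. rewrite pow_add, <- pow_mult, pow_1. ring.
    + lia.
    + cbn [podd]. ring.
Qed.

Lemma podd_fact n : podd n * INR (fact n) * 2^n = INR (fact (2*n)).
Proof.
  induction n.
  - simpl. ring.
  - replace (2 * S n)%nat with (S (S (2*n))) by lia.
    rewrite !fact_simpl. rewrite !mult_INR. rewrite <- IHn. cbn [podd pow].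
    rewrite !S_INR, plus_INR, mult_INR. simpl (INR 2). simpl (INR 1). ring.
Qed.

Lemma podd_pos n : 0 < podd n.
Proof. induction n; simpl. lra. apply Rmult_lt_0_compat; auto. apply lt_0_INR. lia. Qed.

Lemma ccQ e t : forall D m, t = (D + 2*m)%nat ->
  cc e t D * INR (fact m) * 2^m = (-1)^m * e^(D+m) * INR (fact t).
Proof.
  induction t; intros D m Ht.
  - assert (D = 0%nat) by lia. assert (m = 0%nat) by lia. subst. simpl. ring.
  - cbn [cc]. rewrite fact_simpl, mult_INR.
    destruct D as [|D'], m as [|m']; try lia.
    +
      pose proof (IHt 1%nat m' ltac:(lia)) as IH2.
      rewrite fact_simpl, mult_INR. cbn [pow] in *.
      replace (INR 0) with 0 by reflexivity.
      replace (1 + m')%nat with (S m') in IH2 by lia.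
      replace (0 + S m')%nat with (S m') by lia.
      cbn [pow] in *.
      rewrite Ht. rewrite !S_INR, plus_INR, mult_INR in *. simpl (INR 2).
      transitivity (- (2 * (INR m' + 1)) * (cc e t 1 * INR (fact m') * 2^m')).
      { ring. }
      rewrite IH2. rewrite !S_INR. replace (INR 0) with 0 by reflexivity. ring.
    +
      pose proof (IHt D' 0%nat ltac:(lia)) as IH1.
      rewrite (cc_big e t (S (S D'))) by lia.
      simpl (INR (fact 0)) in *. cbn [pow] in *. change (Nat.pred (S D')) with D'.
      replace (S D' + 0)%nat with (S (D' + 0)) by lia.
      cbn [pow]. rewrite Ht. replace (S (D' + 2 * 0))%nat with (S D') by lia.
      transitivity (INR (S D') * e * (cc e t D' * 1 * 1)). { ring. }
      rewrite IH1. replace (S D' + 2*0)%nat with (S D') by lia. ring.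
    +
      pose proof (IHt D' (S m') ltac:(lia)) as IH1.
      pose proof (IHt (S (S D')) m' ltac:(lia)) as IH2.
      change (Nat.pred (S D')) with D'.
      rewrite fact_simpl, mult_INR. cbn [pow] in *.
      replace (S D' + S m')%nat with (S (D' + S m')) by lia.
      replace (S (S D') + m')%nat with (S (D' + S m')) in IH2 by lia.
      cbn [pow] in *.
      rewrite fact_simpl, mult_INR in IH1. cbn [pow] in IH1.
      transitivity (INR (S D') * e * (cc e t D' * (INR (S m') * INR (fact m')) * (2 * 2 ^ m'))
                    - 2 * INR (S m') * (cc e t (S (S D')) * INR (fact m') * 2 ^ m')).
      { ring. }
      rewrite IH1, IH2. rewrite Ht. rewrite !S_INR, !plus_INR, !mult_INR, !S_INR. simpl (INR 2).
      replace (INR 0) with 0 by reflexivity. ring.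
Qed.


Theorem theorem2p3 (r m k n : nat) (hk : (1 <= k)%nat) :
  limit1_in
    (fun q : R =>
       sum_f_R0
         (fun j => (-1) ^ j * q ^ (r * j * j + m * j) * qbinom (q ^ k) (2 * n) j)
         (2 * n)
       / qpoch q (q ^ 2) n)
    (fun q : R => q <> 1)
    ((INR k - 2 * INR r) ^ n)
    1.
Proof.
  change (Lim (fun q : R =>
       sum_f_R0
         (fun j => (-1) ^ j * q ^ (r * j * j + m * j) * qbinom (q ^ k) (2 * n) j)
         (2 * n)
       / qpoch q (q ^ 2) n) ((INR k - 2 * INR r) ^ n)).
  pose proof (main r m k (2*n) 0 0) as ON.
  replace (hh (2*n) 0) with n in ON by (unfold hh; rewrite Nat.add_0_r, Nat.mul_comm, Nat.div_mul; lia).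
  pose proof (Ord_den n) as OD.
  assert (Hp : podd n <> 0) by (pose proof (podd_pos n); lra).
  pose proof (Lim_mul _ _ _ _ ON (Lim_inv _ _ OD Hp)) as HL.
  eapply Lim_ext; [|eapply Lim_eq; [exact HL|]].
  - intros q Hq Hq2. cbv beta. cbn [dif].
    assert (Hq0 : 0 < q) by (apply Rabs_def2 in Hq2; lra).
    assert (Hk0 : 0 < q^k) by (apply pow_lt; auto).
    assert (Hk1 : q^k <> 1).
    { replace k with (S (k - 1)) by lia. simpl. rewrite Rmult_comm. apply pow_ne1; auto. }
    rewrite (A_closed r m k q (2*n) 0).
    rewrite sum_sm.
    rewrite (sm_ext (fun j => (-1) ^ j * q ^ (r * j * j + m * j) * qbinom (q ^ k) (2 * n) j)
                    (fun j => (-1) ^ j * q ^ (r * j * j + m * j) * G (q ^ k) (2 * n) j * q ^ (0 * (k * (2 * n - j) + 2 * r * j)))).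
    2:{ intros j Hj. rewrite G_qbinom by (auto; lia). rewrite Nat.mul_0_l. simpl pow at 3. ring. }
    set (X := sm _ _). set (Y := qpoch q (q^2) n).
    pose proof (eps_nz q Hq n) as He.
    destruct (Req_dec Y 0) as [Y0|Y0].
    + rewrite Y0. unfold Rdiv. rewrite Rmult_0_l, !Rinv_0. ring.
    + field. auto.
  - pose proof (ccQ (ee r k) (2*n) 0 n ltac:(lia)) as Q.
    pose proof (podd_fact n) as PF.
    assert (Hf : INR (fact n) * 2^n <> 0).
    { apply Rmult_integral_contrapositive_currified. apply not_0_INR. apply fact_neq_0.
      apply pow_nonzero. lra. }
    assert (Hc : cc (ee r k) (2*n) 0 = (-1)^n * (ee r k)^n * podd n).
    { apply (Rmult_eq_reg_r (INR (fact n) * 2^n)); auto.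
      rewrite <- Rmult_assoc, Q. rewrite Nat.add_0_l, <- PF. ring. }
    rewrite Hc. rewrite <- Rpow_mult_distr. unfold ee. rewrite mult_INR. simpl (INR 2).
    field_simplify; auto. f_equal. ring.
Qed.
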